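(* For all integers $N\ge 1$ and $k\ge 1$, $$\mathbb{E}[\mathcal{R}_{k+1}(N+1)]=\sum_{1\le j_1<j_2<\dots<j_k\le N}\frac{1}{j_1 j_2\cdots j_k},$$ (the sum being $0$ if $k>N$); moreover $\mathcal{R}_1(N)=1$ for all $N\ge1$. In particular $\mathbb{E}[\mathcal{R}_{N}(N)]=1/(N-1)!$ and $\mathbb{E}[\mathcal{R}_3(N+1)]=\tfrac12\big(H_N^2-H_N^{(2)}\big)$, where $H_N=\sum_{i\le N}1/i$, $H_N^{(2)}=\sum_{i\le N}1/i^2$.
   Context: A random recursive hypergraph (RRH) is the random hypergraph process defined as follows. At size $N=1$ it has vertex set $\{v_1\}$ and edge set $\{\{v_1\}\}$. Given the hypergraph of size $N$ (vertices $v_1,\dots,v_N$, exactly $N$ edges), one chooses an existing edge $e$ uniformly at random, independently of the past, and adds a new vertex $v_{N+1}$ together with the new edge $e\cup\{v_{N+1}\}$. The rank of a vertex $v$ is $\min\{|e| : v\in e\}$. $\mathcal{R}_k(N)$ denotes the number of vertices of rank $k$ in the RRH of size $N$ (equivalently, the number of edges of size $k$). *)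

(* Defs.v *)
From mathcomp Require Import all_boot all_order all_algebra.
Set Implicit Arguments. Unset Strict Implicit. Unset Printing Implicit Defensive.
Import Order.TTheory GRing.Theory Num.Theory.
Local Open Scope ring_scope.

(* A history of the RRH of size N is the list of choices h = [c_1; ...; c_(N-1)]
   where c_i (0-indexed edge number) is the edge chosen when passing from size i
   to size i+1, so 0 <= c_i < i. *)

(* All histories of length n (i.e. of the RRH of size n+1); each one has
   the same probability 1/n!, so the uniform law on this list is the law
   of the process. *)
Fixpoint hists (n : nat) : seq (seq nat) :=
  match n with
  | 0 => [:: [::]]
  | n'.+1 => flatten [seq [seq rcons h c | c <- iota 0 n'.+1] | h <- hists n']
  end.

(* Build the edge list: vertices are labelled 1..N (v_i is labelled i);
   edges are lists of vertices, edge number j is the j-th element. *)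
Fixpoint build (h : seq nat) (E : seq (seq nat)) : seq (seq nat) :=
  match h with
  | [::] => E
  | c :: h' => build h' (rcons E ((size E).+1 :: nth [::] E c))
  end.

Definition rrh (h : seq nat) : seq (seq nat) := build h [:: [:: 1]].

Definition has_rank (E : seq (seq nat)) (v k : nat) : bool :=
  has (fun e => (v \in e) && (size e == k)%N) E &&
  all (fun e => (v \in e) ==> (k <= size e)%N) E.

Definition Rk (k : nat) (h : seq nat) : nat :=
  count (fun v => has_rank (rrh h) v k) (iota 1 (size h).+1).

Definition ER (k N : nat) : rat :=
  (\sum_(h <- hists N.-1) (Rk k h)%:R) / (size (hists N.-1))%:R.

(* sum over 1 <= j_1 < ... < j_k <= N of 1/(j_1 ... j_k);
   element j : 'I_N stands for the integer j+1. *)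
Definition esum_inv (k N : nat) : rat :=
  \sum_(S : {set 'I_N} | #|S| == k) \prod_(j in S) ((j.+1)%:R)^-1.

Definition harm (N : nat) : rat := \sum_(1 <= i < N.+1) (i%:R)^-1.
Definition harm2 (N : nat) : rat := \sum_(1 <= i < N.+1) ((i ^ 2)%N%:R)^-1.

(* Main.v *)
Require Import Defs.
From mathcomp Require Import all_boot all_order all_algebra.
From mathcomp Require Import ring.
Set Implicit Arguments. Unset Strict Implicit. Unset Printing Implicit Defensive.
Import Order.TTheory GRing.Theory Num.Theory.

Lemma build_rcons h c E : build (rcons h c) E =
  rcons (build h E) ((size (build h E)).+1 :: nth [::] (build h E) c).
Proof. by elim: h E => [|a h IH] E //=. Qed.

Lemma size_build h E : size (build h E) = size h + size E.
Proof. by elim: h E => [|a h IH] E //=; rewrite IH size_rcons addnS. Qed.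

Lemma rrh_rcons h c : rrh (rcons h c) =
  rcons (rrh h) ((size h).+2 :: nth [::] (rrh h) c).
Proof. by rewrite /rrh build_rcons size_build addn1. Qed.

Lemma size_rrh h : size (rrh h) = (size h).+1.
Proof. by rewrite /rrh size_build addn1. Qed.

Lemma hists_rcons n h' : h' \in hists n.+1 ->
  exists h c, [/\ h \in hists n, c < n.+1 & h' = rcons h c].
Proof.
move=> /flatten_mapP [h hin /mapP [c cin ->]].
by exists h, c; split=> //; rewrite mem_iota in cin.
Qed.

Definition inv (E : seq (seq nat)) := forall j, j < size E ->
  (j.+1 \in nth [::] E j) /\ forall v, v \in nth [::] E j ->
    (0 < v <= j.+1) /\ size (nth [::] E v.-1) <= size (nth [::] E j).

Lemma inv_rcons E c : inv E -> c < size E ->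
  inv (rcons E ((size E).+1 :: nth [::] E c)).
Proof.
move=> I cE j; rewrite size_rcons ltnS => jE.
rewrite nth_rcons; case: ltnP => jlt.
  have [I1 I2] := I j jlt; split=> // v vin.
  have [/andP[v0 vj] sz] := I2 v vin.
  rewrite v0 vj nth_rcons.
  have -> : v.-1 < size E by rewrite -ltnS prednK //; apply: leq_ltn_trans vj _.
  by [].
have jeq : j = size E by apply/eqP; rewrite eqn_leq jE jlt.
subst j; rewrite eqxx; split; first by rewrite inE eqxx.
move=> v; rewrite inE => /orP [/eqP ->|vin].
  by rewrite /= nth_rcons ltnn eqxx.
have [_ I2] := I c cE.
have [/andP[v0 vc] sz] := I2 v vin.
have vE : v.-1 < size E by rewrite -ltnS prednK //; apply: leq_ltn_trans vc _.
rewrite v0 /= nth_rcons vE.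
split; first by apply: (leq_trans vc); rewrite ltnS ltnW.
by rewrite (leq_trans sz).
Qed.

Definition cnt k (E : seq (seq nat)) := count (fun e => size e == k) E.

Lemma hists_prop n h : h \in hists n ->
  [/\ size h = n, inv (rrh h) & all (fun e => 0 < size e) (rrh h)].
Proof.
elim: n h => [|n IH] h.
  rewrite inE => /eqP ->; split=> //.
  by move=> [|j] //= _; split=> // v; rewrite inE => /eqP ->.
move=> /hists_rcons [h0 [c [hin cn ->]]].
have [sz I A] := IH _ hin.
rewrite size_rcons sz rrh_rcons; split=> //.
  have e : (size h0).+2 = (size (rrh h0)).+1 by rewrite size_rrh.
  by rewrite e; apply: inv_rcons => //; rewrite size_rrh sz.
by rewrite all_rcons A andbT.
Qed.

Lemma has_rankE E v k : inv E -> 0 < v <= size E ->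
  has_rank E v k = (size (nth [::] E v.-1) == k).
Proof.
move=> I /andP[v0 vE].
have vE' : v.-1 < size E by rewrite -ltnS prednK.
have [I1 _] := I _ vE'; rewrite prednK // in I1.
apply/idP/idP.
  move=> /andP[/hasP [e ein /andP[ve /eqP se]] /allP al].
  have := al _ (mem_nth [::] vE'); rewrite I1 /= => ks.
  move: ein => /(nthP [::]) [j jE ej].
  have [_ I2] := I _ jE; have [_ s2] := I2 v (ltac:(by rewrite ej)); rewrite ej se in s2.
  by rewrite eqn_leq s2 ks.
move=> /eqP sk; apply/andP; split.
  by apply/hasP; exists (nth [::] E v.-1); rewrite ?mem_nth // I1 sk eqxx.
apply/allP => e /(nthP [::]) [j jE <-]; apply/implyP => vin.
by have [_ I2] := I _ jE; have [_ s2] := I2 v vin; rewrite -sk.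
Qed.

Lemma count_nth_iota (E : seq (seq nat)) (P : pred (seq nat)) :
  count (fun i => P (nth [::] E i)) (iota 0 (size E)) = count P E.
Proof. by rewrite -[in RHS](mkseq_nth [::] E) /mkseq count_map. Qed.

Lemma RkE n h k : h \in hists n -> Rk k h = cnt k (rrh h).
Proof.
move=> /hists_prop [sz I _].
rewrite /Rk -size_rrh.
rewrite (eq_in_count (a2 := fun v => size (nth [::] (rrh h) v.-1) == k)); last first.
  by move=> v; rewrite mem_iota add1n ltnS => vr; apply: has_rankE.
by rewrite (iotaDl 1 0) count_map /cnt -count_nth_iota.
Qed.

Lemma size_flatten_const (A B : Type) (s : seq A) (f : A -> seq B) m :
  (forall x, size (f x) = m) -> size (flatten (map f s)) = m * size s.
Proof.
move=> H; elim: s => [|a s IH] /=; first by rewrite muln0.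
by rewrite size_cat IH H mulnS.
Qed.

Lemma size_hists n : size (hists n) = n`!.
Proof.
elim: n => [|n IH] //=.
rewrite (@size_flatten_const _ _ _ _ n.+1) ?IH ?factS // => x.
by rewrite /= size_map size_iota.
Qed.

Lemma rcons_hists n h c : h \in hists n -> c < n.+1 -> rcons h c \in hists n.+1.
Proof.
move=> hin cn; apply/flatten_mapP; exists h => //.
by apply: map_f; rewrite mem_iota.
Qed.

Definition Sn k n := \sum_(h <- hists n) Rk k h.

Lemma cnt_rcons k E e : cnt k (rcons E e) = cnt k E + (size e == k).
Proof. by rewrite /cnt -cats1 count_cat /= addn0. Qed.

Lemma sum_bool (T : Type) (s : seq T) (P : pred T) :
  \sum_(c <- s) (P c : nat) = count P s.
Proof.
rewrite -sum1_count [RHS]big_mkcond; apply: eq_bigr => c _; by case: (P c).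
Qed.

Lemma Sn_rec k n : Sn k.+1 n.+1 = n.+1 * Sn k.+1 n + Sn k n.
Proof.
rewrite /Sn.
change (hists n.+1) with (flatten [seq [seq rcons h c | c <- iota 0 n.+1] | h <- hists n]).
rewrite big_flatten big_map big_distrr -big_split.
rewrite big_seq_cond [in RHS]big_seq_cond; apply: eq_bigr => h /andP[hin _].
rewrite big_map (eq_big_seq (fun c => Rk k.+1 h + (size (nth [::] (rrh h) c) == k))); last first.
  move=> c; rewrite mem_iota add0n => cn.
  rewrite (RkE k.+1 (rcons_hists hin cn)) (RkE k.+1 hin) rrh_rcons cnt_rcons.
  by [].
rewrite big_split sum_bool (RkE k hin) /cnt -count_nth_iota size_rrh.
have [sz _ _] := hists_prop hin.
by rewrite sz big_const_seq count_predT size_iota iter_addn_0 mulnC.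
Qed.

Lemma Sn0 n : Sn 0 n = 0.
Proof.
rewrite /Sn big_seq; apply: big1 => h hin.
have [_ _ A] := hists_prop hin; rewrite (RkE 0 hin) /cnt.
apply/eqP; rewrite -leqn0 leqNgt -has_count; apply/hasPn => e ein.
by have := allP A e ein; case: (size e).
Qed.

Lemma Sn_base k : Sn k 0 = (k == 1).
Proof. by rewrite /Sn /= big_seq1 (@RkE 0 [::] k (mem_head _ _)) /cnt /=; case: k => [|[|k]]. Qed.
Section W.
Variable N : nat.
Let w := widen_ord (leqnSn N).
Lemma w_inj : injective w. Proof. by move=> x y /(congr1 val) /= /val_inj. Qed.

Lemma w_neq x : w x != ord_max.
Proof. by rewrite -val_eqE /= neq_ltn ltn_ord. Qed.

Lemma im_preim (S : {set 'I_N.+1}) : w @: (w @^-1: S) = S :\ ord_max.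
Proof.
apply/setP => x; rewrite !inE; apply/imsetP/idP => [[y]|/andP[xm xS]].
  by rewrite inE => yS ->; rewrite yS w_neq.
have xN : x < N.
  by rewrite ltn_neqAle -ltnS ltn_ord andbT; move: xm; rewrite -val_eqE.
have e : w (Ordinal xN) = x by apply: val_inj.
by exists (Ordinal xN); rewrite ?inE e.
Qed.

Lemma preim_im (T : {set 'I_N}) : w @^-1: (w @: T) = T.
Proof. by apply/setP => x; rewrite inE mem_imset //; exact: w_inj. Qed.

Lemma preim_imU (T : {set 'I_N}) : w @^-1: (ord_max |: w @: T) = T.
Proof.
apply/setP => x; rewrite !inE mem_imset; last exact: w_inj.
by rewrite (negbTE (w_neq x)).
Qed.

Lemma max_notin (T : {set 'I_N}) : ord_max \notin w @: T.
Proof. by apply/imsetP => [[y _ /eqP]]; rewrite eq_sym (negbTE (w_neq y)). Qed.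

Local Open Scope ring_scope.
Definition a M (j : 'I_M) : rat := ((j.+1)%:R)^-1.

Lemma prod_im (T : {set 'I_N}) :
  \prod_(j in w @: T) ((j.+1)%:R)^-1 = \prod_(j in T) ((j.+1)%:R)^-1 :> rat.
Proof. by rewrite big_imset //; move=> x y _ _; exact: w_inj. Qed.

Lemma esum_rec k : esum_inv k.+1 N.+1 = esum_inv k.+1 N + esum_inv k N / (N.+1)%:R.
Proof.
rewrite /esum_inv (bigID (fun S : {set 'I_N.+1} => ord_max \in S)) /= addrC; congr (_ + _).
  rewrite (reindex_onto (fun T : {set 'I_N} => w @: T) (fun S : {set 'I_N.+1} => w @^-1: S)); last first.
    by move=> S /andP[_ Sm]; rewrite im_preim; apply/setP => x; rewrite !inE;
       case: eqP => // ->; rewrite (negbTE Sm).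
  apply: eq_big => T; first by rewrite card_imset ?max_notin ?preim_im ?eqxx ?andbT //; exact: w_inj.
  by move=> _; rewrite prod_im.
rewrite (reindex_onto (fun T : {set 'I_N} => ord_max |: w @: T) (fun S : {set 'I_N.+1} => w @^-1: S)); last first.
  by move=> S /andP[_ Sm]; rewrite im_preim setD1K.
rewrite mulr_suml; apply: eq_big => T.
  rewrite cardsU1 max_notin preim_imU eqxx andbT setU11 andbT.
  by rewrite card_imset ?add1n ?eqSS //; exact: w_inj.
move=> _; rewrite big_setU1 ?max_notin //= prod_im mulrC.
by [].
Qed.
End W.

Local Open Scope ring_scope.

Lemma esum0 N : esum_inv 0 N = 1.
Proof.
rewrite /esum_inv (big_pred1 set0); first by rewrite big_set0.
by move=> S; rewrite /= cards_eq0.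
Qed.

Lemma esum_big k N : (N < k)%N -> esum_inv k N = 0.
Proof.
move=> Nk; rewrite /esum_inv big_pred0 // => S.
apply/negbTE; rewrite neq_ltn; apply/orP; left.
apply: leq_ltn_trans Nk; rewrite -[X in (_ <= X)%N](card_ord N).
exact: max_card.
Qed.

Lemma harmS N : harm N.+1 = harm N + ((N.+1)%:R)^-1.
Proof. by rewrite /harm big_nat_recr. Qed.
Lemma harm2S N : harm2 N.+1 = harm2 N + ((N.+1)%:R ^+ 2)^-1.
Proof. by rewrite /harm2 big_nat_recr //= natrX. Qed.

Lemma esum1 N : esum_inv 1 N = harm N.
Proof.
elim: N => [|N IH]; first by rewrite esum_big // /harm big_geq.
by rewrite esum_rec IH esum0 harmS mul1r.
Qed.

Lemma esum2 N : esum_inv 2 N = 2%:R^-1 * (harm N ^+ 2 - harm2 N).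
Proof.
elim: N => [|N IH]; first by rewrite esum_big // /harm /harm2 !big_geq // expr0n subrr mulr0.
rewrite esum_rec IH esum1 harmS harm2S.
have h : (N.+1)%:R != 0 :> rat by rewrite pnatr_eq0.
field.
by rewrite addrC natr1.
Qed.

Lemma esum_diag n : esum_inv n n = ((n`!)%:R)^-1.
Proof.
elim: n => [|n IH]; first by rewrite esum0 invr1.
by rewrite esum_rec IH esum_big // add0r factS natrM invfM mulrC.
Qed.

Definition E' k N : rat := (Sn k N)%:R / (N`!)%:R.

Lemma ER_E' k N : ER k N.+1 = E' k N.
Proof. by rewrite /ER /E' /= size_hists /Sn natr_sum. Qed.

Lemma E'_rec k N : E' k.+1 N.+1 = E' k.+1 N + E' k N / (N.+1)%:R.
Proof.
rewrite /E' Sn_rec factS natrD !natrM.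
have h1 : (N.+1)%:R != 0 :> rat by rewrite pnatr_eq0.
have h2 : (N`!)%:R != 0 :> rat by rewrite pnatr_eq0 -lt0n fact_gt0.
field.
by rewrite h2 andbT addrC natr1.
Qed.

Lemma part1 N k : ER k.+1 N.+1 = esum_inv k N.
Proof.
rewrite ER_E'; elim: N k => [|N IH] k.
  rewrite /E' Sn_base /= divr1; case: k => [|k]; first by rewrite esum0.
  by rewrite esum_big.
rewrite E'_rec IH; case: k => [|k].
  by rewrite /E' Sn0 !mul0r addr0 !esum0.
by rewrite IH -esum_rec.
Qed.

Lemma cnt1 n h : h \in hists n -> cnt 1 (rrh h) = 1%N.
Proof.
elim: n h => [|n IH] h.
  by rewrite inE => /eqP ->.
move=> /hists_rcons [h0 [c [hin cn ->]]].
have [sz _ A] := hists_prop hin.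
rewrite rrh_rcons cnt_rcons IH //= eqSS.
have cE : (c < size (rrh h0))%N by rewrite size_rrh sz.
by have := allP A _ (mem_nth [::] cE); case: (size _).
Qed.

Theorem mainTheorem9 :
  (forall N k : nat, (1 <= N)%N -> (1 <= k)%N ->
     ER k.+1 N.+1 = esum_inv k N) /\
  (forall N : nat, (1 <= N)%N ->
     forall h, h \in hists N.-1 -> Rk 1 h = 1%N) /\
  (forall N : nat, (1 <= N)%N -> ER N N = ((N.-1)`!%:R)^-1) /\
  (forall N : nat, (1 <= N)%N ->
     ER 3 N.+1 = 2%:R^-1 * (harm N ^+ 2 - harm2 N)).
Proof.
split; first by move=> N k _ _; exact: part1.
split; first by move=> N _ h hin; rewrite (RkE 1 hin) (cnt1 hin).
split; first by case=> // m _; rewrite part1 esum_diag.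
by move=> N _; rewrite part1 esum2.
Qed.
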